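(* Let $\varphi$ be an increasing concave function on $[0,1]$ with $\varphi(0)=0$, $\varphi(1)=1$ and $\lim_{t\to0}\varphi(t)/t=\infty$. Then there is a function $f\in\varLambda_\varphi$ with $\int_0^1f(t)\,dt\ne0$ such that $\|1-\lambda f\|_{\varLambda_\varphi}\ge1$ for every $\lambda\in\mathbb{R}$.
   Context: The Lorentz space $\varLambda_\varphi$ consists of measurable $x$ on $[0,1]$ with $\|x\|_{\varLambda_\varphi}=\int_0^1x^*(t)\,d\varphi(t)<\infty$, where $x^*$ is the decreasing right-continuous rearrangement of $|x|$; $1$ denotes the function identically equal to $1$ on $[0,1]$. *)

(* Defs.v *)
From HB Require Import structures.
From mathcomp Require Import all_boot all_order all_algebra.
From mathcomp Require Import all_classical all_reals all_analysis.
Set Implicit Arguments. Unset Strict Implicit. Unset Printing Implicit Defensive.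
Import Order.TTheory GRing.Theory Num.Theory.
Import numFieldNormedType.Exports.
Local Open Scope classical_set_scope.
Local Open Scope ring_scope.
Local Open Scope ereal_scope.

Definition distrib (R : realType) (x : R -> R) (s : R) : \bar R :=
  (@lebesgue_measure R) ([set t | (0 <= t <= 1)%R /\ (s < `|x t|)%R]).

(* Decreasing right-continuous rearrangement of |x|:
   x*(t) = inf { s >= 0 : d_x(s) <= t }  (= +oo if the set is empty). *)
Definition rearr (R : realType) (x : R -> R) (t : R) : \bar R :=
  ereal_inf [set s%:E | s in [set s : R | (0 <= s)%R /\ distrib x s <= t%:E]].

(* Lorentz norm  ||x|| = \int_[0,1] x*(t) d(phi)(t), where mu is the
   Lebesgue--Stieltjes measure of phi on [0,1]. *)
Definition lorentz_norm (R : realType) (mu : {measure set (measurableTypeR R) -> \bar R})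
  (x : R -> R) : \bar R :=
  \int[mu]_(t in `[(0:R)%R, 1%R]%classic) rearr x t.

(* mu is the Lebesgue--Stieltjes measure of phi on [0,1]:
   mu([0,t]) = phi(t) for 0 < t <= 1 (the possible jump of phi at 0,
   i.e. phi(0+) > phi(0) = 0, becomes an atom at 0, as in the
   Stieltjes integral \int_0^1 x* dphi). *)
Definition stieltjes_of (R : realType) (mu : {measure set (measurableTypeR R) -> \bar R})
  (phi : R -> R) : Prop :=
  forall t : R, (0 < t <= 1)%R -> mu `[(0:R)%R, t]%classic = (phi t)%:E.

Definition in_lorentz (R : realType) (mu : {measure set (measurableTypeR R) -> \bar R})
  (x : R -> R) : Prop :=
  measurable_fun `[(0:R)%R, 1%R]%classic x /\ lorentz_norm mu x < +oo.

(* Main.v *)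
Require Import Defs.
From HB Require Import structures.
From mathcomp Require Import all_boot all_order all_algebra.
From mathcomp Require Import all_classical all_reals all_analysis.
From mathcomp Require Import measurable_realfun lra.
Import Order.TTheory GRing.Theory Num.Theory.
Import numFieldNormedType.Exports.
Local Open Scope classical_set_scope.
Local Open Scope ring_scope.


Lemma int_mono (R : realType) (mu : {measure set (measurableTypeR R) -> \bar R})
  (D : set R) (f g : R -> \bar R) :
  (forall x, D x -> (0 <= f x)%E) -> (forall x, D x -> (f x <= g x)%E) ->
  (\int[mu]_(x in D) f x <= \int[mu]_(x in D) g x)%E.
Proof.
move=> f0 fg.
rewrite ge0_integralE // ge0_integralE //; last first.
  by move=> x Dx; apply: le_trans (f0 x Dx) (fg x Dx).
apply: le_ereal_sup => _ [h hf <-]; exists h => //= x.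
apply: le_trans (hf x) _; exact: lee_restrict.
Qed.

Lemma leb_mono (R : realType) (A B : set R) : A `<=` B ->
  (@lebesgue_measure R A <= @lebesgue_measure R B)%E.
Proof. move=> AB. exact: le_outer_measure. Qed.

Lemma rearr_ge0 (R : realType) (x : R -> R) t : (0 <= rearr x t)%E.
Proof.
apply: le_ereal_inf_tmp => _ [s [s0 _] <-]; by rewrite lee_fin.
Qed.

Lemma rearr_lb (R : realType) (x : R -> R) (t v : R) (E : set R) :
  E `<=` `[0, 1] -> (forall y, E y -> v <= `|x y|) ->
  (t%:E < @lebesgue_measure R E)%E -> (v%:E <= rearr x t)%E.
Proof.
move=> E01 Ev tE.
apply: le_ereal_inf_tmp => _ [s [s0 ds] <-]; rewrite lee_fin.
rewrite leNgt; apply/negP => sv.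
have : (@lebesgue_measure R E <= distrib x s)%E.
  apply: leb_mono => y Ey; split.
    by have := E01 y Ey; rewrite /= in_itv /=.
  by apply: lt_le_trans sv (Ev y Ey).
move=> H; have := le_trans H ds; rewrite leNgt tE //.
Qed.

Lemma rearr_ub (R : realType) (x : R -> R) (t v : R) :
  0 <= t -> 0 <= v -> (forall y, 0 <= y <= 1 -> `|x y| <= v) ->
  (rearr x t <= v%:E)%E.
Proof.
move=> t0 v0 xv; apply: ereal_inf_lbound; exists v => //; split => //.
rewrite /distrib (_ : [set _ | _] = set0) ?measure0 ?lee_fin //.
apply/seteqP; split => y //= [y01 vy]; have := xv y y01.
by rewrite leNgt vy.
Qed.



Lemma mu_co01 (R : realType) (mu : {measure set (measurableTypeR R) -> \bar R}) (phi : R -> R) :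
  stieltjes_of mu phi -> (forall t, 0 < t < 1 -> t <= phi t) ->
  (1 <= mu `[(0:R)%R, 1%R[%classic)%E.
Proof.
move=> st ge.
have H : forall t, 0 < t < 1 -> (t%:E <= mu `[(0:R)%R, 1%R[%classic)%E.
  move=> t /andP[t0 t1].
  apply: (@le_trans _ _ (mu `[(0:R)%R, t]%classic)).
    rewrite st; first by rewrite lee_fin ge // t0 t1.
    by rewrite t0 ltW.
  apply: le_measure; rewrite ?inE; try exact: measurable_itv.
  by move=> y /=; rewrite !in_itv /= => /andP[-> /le_lt_trans ->].
have h12 : 0 < (1 / 2 : R) < 1.
  by apply/andP; split; lra.
have := H _ h12; move: H.
case: (mu _) => [r| |] H //.
rewrite lee_fin => r0.
change (((1:R)%:E) <= r%:E)%E; rewrite lee_fin leNgt; apply/negP => r1.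
have := H ((r + 1) / 2); rewrite lee_fin.
have -> : 0 < (r + 1) / 2 < 1.
  by apply/andP; split; lra.
move=> /(_ isT); try lra.
by move=> _; exact: leey.
Qed.



Lemma memitv (R : realType) (i : interval R) (t : R) : (t \in [set` i]) = (t \in i).
Proof. by apply/idP/idP => [/set_mem //|H]; apply: mem_set. Qed.

Lemma norm_lb (R : realType) (mu : {measure set (measurableTypeR R) -> \bar R})
  (phi : R -> R) (g : R -> R) (p v1 v2 : R) (E : set R) :
  stieltjes_of mu phi -> (forall t, 0 < t < 1 -> t <= phi t) -> phi 1 = 1 ->
  0 < p < 1 -> E `<=` `[(0:R)%R, 1%R]%classic ->
  (p%:E < @lebesgue_measure R E)%E ->
  0 <= v1 -> 0 <= v2 -> (forall y, E y -> v1 <= `|g y|) ->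
  (forall y, 0 <= y <= 1 -> v2 <= `|g y|) ->
  ((v1 * phi p + v2 * (1 - phi p))%:E <= lorentz_norm mu g)%E.
Proof.
move=> st ge phi1 /andP[p0 p1] E01 pE v10 v20 Ev1 Ev2.
set A := `[(0:R)%R, p]%classic.
set B := `](p:R), 1%R[%classic.
set D := `[(0:R)%R, 1%R]%classic.
have mA : measurable A by exact: measurable_itv.
have mB : measurable B by exact: measurable_itv.
have mD : measurable D by exact: measurable_itv.
pose low t := ((v1 * \1_A t)%:E + (v2 * \1_B t)%:E)%E.
have step1 : (\int[mu]_(t in D) low t <= lorentz_norm mu g)%E.
  apply: int_mono.
    by move=> t _; rewrite /low adde_ge0 // lee_fin mulr_ge0.
  move=> t; rewrite /D /= in_itv /= => /andP[t0 t1].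
  rewrite /low !indicE /A /B !memitv !in_itv /= t0 /=.
  have [tp|pt] := leP t p.
    rewrite /= mulr1 mulr0 adde0.
    apply: rearr_lb E01 Ev1 _.
    by apply: le_lt_trans pE; rewrite lee_fin.
  rewrite mulr0 add0e.
  have [t1'|t1'] := ltP t 1.
    rewrite mulr1; apply: (@rearr_lb _ _ _ _ D).
    - by [].
    - by move=> y; rewrite /D /= in_itv /=; exact: Ev2.
    by rewrite lebesgue_measure_itv /= lte01 /= sube0 lte_fin.
  rewrite /= mulr0; exact: rearr_ge0.
have AD : A `<=` D.
  move=> y; rewrite /A /D /= !in_itv /= => /andP[-> yp] /=.
  exact: le_trans yp (ltW p1).
have BD : B `<=` D.
  move=> y; rewrite /B /D /= !in_itv /= => /andP[py y1].
  by rewrite (ltW y1) (ltW (lt_trans p0 py)).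
have mf (v : R) (C : set R) : measurable C -> measurable_fun D (fun t => (v * \1_C t)%:E).
  move=> mC; apply/measurable_EFinP; apply: measurable_funM.
    exact: measurable_cst.
  exact: measurable_indic.
have step2 : (\int[mu]_(t in D) low t = (v1 * phi p)%:E + v2%:E * mu B)%E.
  rewrite ge0_integralD //; try (by move=> t _; rewrite lee_fin mulr_ge0); try exact: mf.
  under eq_integral do rewrite EFinM.
  under [X in (_ + X)%E]eq_integral do rewrite EFinM.
  rewrite ge0_integralZl_EFin //; try (by move=> t _; rewrite lee_fin); try (by apply/measurable_EFinP; exact: measurable_indic).
  rewrite ge0_integralZl_EFin //; try (by move=> t _; rewrite lee_fin); try (by apply/measurable_EFinP; exact: measurable_indic).
  rewrite !integral_indic // (setIidl AD) (setIidl BD) st ?p0 ?ltW //.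
have hco := mu_co01 _ _ _ st ge.
have eAB : `[(0:R)%R, 1%R[%classic = A `|` B.
  apply/seteqP; split => y; rewrite /A /B /= !in_itv /=.
    move=> /andP[y0 y1]; have [yp|py] := leP y p; [left|right]; apply/andP; split => //.
  by case=> /andP[y0 y1]; apply/andP; split; lra.
have dAB : A `&` B = set0.
  apply/seteqP; split => y //; rewrite /A /B /= !in_itv /=.
  move=> [/andP[_ yp] /andP[py _]]; lra.
have hsum : (mu `[(0:R)%R, 1%R[%classic = mu A + mu B)%E.
  by rewrite eAB; apply: measureU.
rewrite hsum in hco.
have muA : mu A = (phi p)%:E by rewrite st // p0 ltW.
have muD : mu D = 1%:E by rewrite st ?phi1 // ltr01 lexx.
have BD' : (mu B <= 1%:E)%E.
  rewrite -muD; apply: le_measure; rewrite ?inE //.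
apply: le_trans step1; rewrite step2.
move: hco BD' (measure_ge0 mu B); rewrite muA.
case: (mu B) => [r| |] // hco BD' B0.
rewrite -EFinD in hco; rewrite -EFinM -EFinD !lee_fin.
have r1 : 1 - phi p <= r.
  have : ((1:R)%:E <= (phi p + r)%:E)%E := hco.
  rewrite lee_fin; lra.
by rewrite lerD2l ler_wpM2l.
Qed.



Theorem corollary5 (R : realType) (phi : R -> R) :
  (forall s t : R, 0 <= s -> s <= t -> t <= 1 -> phi s <= phi t) ->
  (forall s t a : R, 0 <= s <= 1 -> 0 <= t <= 1 -> 0 <= a <= 1 ->
     (1 - a) * phi s + a * phi t <= phi ((1 - a) * s + a * t)) ->
  phi 0 = 0 -> phi 1 = 1 ->
  (phi t / t) @[t --> 0^'+] --> +oo ->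
  forall mu : {measure set (measurableTypeR R) -> \bar R}, stieltjes_of mu phi ->
  exists f : R -> R,
    in_lorentz mu f /\
    (\int[@lebesgue_measure R]_(t in `[(0:R)%R, 1%R]%classic) (f t)%:E != 0)%E /\
    forall l : R, (1%:E <= lorentz_norm mu (fun t => (1 - l * f t)%R))%E.
Proof.
move=> mono conc phi0 phi1 lim mu st.
have ge : forall t, 0 < t < 1 -> t <= phi t.
  move=> t /andP[t0 t1].
  have := conc 0 1 t; rewrite phi0 phi1 !mulr0 !add0r !mulr1.
  apply; apply/andP; split; rewrite ?lexx ?ler01 ?ltW //.
have le1 : forall t, 0 <= t <= 1 -> phi t <= 1.
  by move=> t /andP[t0 t1]; rewrite -phi1; apply: mono.
have H1 : \forall t \near (0:R)^'+, 1 < phi t / t.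
  by have := (cvgryPgt (fun t => phi t / t)).1 lim; apply.
have H : (0:R)^'+ ((fun t => 1 < phi t / t) `&` (fun y => 0 < y) `&` (fun y => y < 1)).
  apply: filterI; [apply: filterI|]; [exact: H1|exact: nbhs_right_gt|exact: nbhs_right_lt ltr01].
have [p [[pphi p0] p1]] := filter_ex H.
have pc : p < phi p.
  by move: pphi; rewrite ltr_pdivlMr // mul1r.
clear H H1 lim; move: pphi => _.
set c := phi p.
have {pc} pc : p < c := pc.
have c1 : c <= 1 by apply: le1; rewrite (ltW p0) (ltW p1).
set h := (p + c) / 2.
have h0 : 0 < h by rewrite /h; lra.
have hc : h < c by rewrite /h; lra.
have ph : p < h by rewrite /h; lra.
set A := `[(0:R)%R, h]%classic.
set D := `[(0:R)%R, 1%R]%classic.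
have mA : measurable A by exact: measurable_itv.
have mD : measurable D by exact: measurable_itv.
pose f := fun t => \1_A t - c * \1_D t.
have fval : forall y, 0 <= y <= 1 -> f y = if y <= h then 1 - c else - c.
  move=> y /andP[y0 y1]; rewrite /f !indicE /A /D !memitv !in_itv /= y0 y1 /=.
  by case: (y <= h); rewrite /= mulr1 ?sub0r.
exists f; split; [split|split].
- apply: measurable_funB; first exact: measurable_indic.
  apply: measurable_funM; [exact: measurable_cst|exact: measurable_indic].
- rewrite /lorentz_norm -/D.
  apply: (@le_lt_trans _ _ (\int[mu]_(t in D) (cst 1%:E) t)%E).
    apply: int_mono => t; first by move=> _; exact: rearr_ge0.
    rewrite /D /= in_itv /= => /andP[t0 _]; apply: rearr_ub => // y y01.
    rewrite fval //; case: ifP => _.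
      by rewrite ger0_norm; lra.
    by rewrite normrN ger0_norm; lra.
  rewrite integral_cst // st ?phi1 ?ltr01 ?lexx // mul1e; exact: ltry.
- have iA : (lebesgue_measure).-integrable D (EFin \o \1_A).
    have := integrable_indic_itv 0 h true false.
    by apply: integrableS.
  have iD : (lebesgue_measure).-integrable D (EFin \o (fun x => c * \1_D x)).
    have -> : EFin \o (fun x => c * \1_D x) = (fun x => c%:E * (EFin \o \1_D) x)%E.
      by apply/funext => x; rewrite /= EFinM.
    apply: integrableZl => //.
    have := integrable_indic_itv (0:R) 1 true false.
    by apply: integrableS.
  rewrite /f; under eq_integral do rewrite EFinB.
  rewrite integralB_EFin //.
  under [X in (_ - X)%E]eq_integral do rewrite EFinM.
  rewrite ge0_integralZl_EFin //; try (by move=> t _; rewrite lee_fin); try (by apply/measurable_EFinP; exact: measurable_indic); try (by lra).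
  rewrite !integral_indic // setIid setIidl; last first.
    move=> y; rewrite /A /D /= !in_itv /= => /andP[-> yh] /=; lra.
  rewrite [X in (X - _)%E](_ : _ = h%:E); last first.
    apply: etrans (lebesgue_measure_itv `[0, h]) _.
    by rewrite /= lte_fin h0 sube0.
  rewrite [X in (_ - _ * X)%E](_ : _ = 1%:E); last first.
    apply: etrans (lebesgue_measure_itv `[0, 1]) _.
    by rewrite /= lte01 sube0.
  rewrite mule1 -EFinB eqe.
  apply/negP => /eqP; lra.
- have c0 : 0 < c by lra.
  move=> l; have [l0|l0] := leP 0 l.
  + set q := 1 - (c + h) / 2.
    have q0 : 0 < q by rewrite /q; lra.
    have q1 : q < 1 by rewrite /q; lra.
    have qc : 1 - c <= q by rewrite /q; lra.
    have phq := ge q (introT andP (conj q0 q1)).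
    have phq1 : phi q <= 1 by apply: le1; rewrite (ltW q0) (ltW q1).
    set v2 := Num.max (1 - l * (1 - c)) 0.
    have v2ge : 1 - l * (1 - c) <= v2 by rewrite le_max lexx.
    apply: le_trans (norm_lb R mu phi (fun t => 1 - l * f t) q (1 + l * c) v2
      `]h, 1]%classic st ge phi1 _ _ _ _ _ _ _).
    * change ((1:R)%:E <= ((1 + l * c) * phi q + v2 * (1 - phi q))%:E)%E.
      rewrite lee_fin.
      have H1 : 0 <= (v2 - (1 - l * (1 - c))) * (1 - phi q).
        by apply: mulr_ge0; lra.
      have H2 : 0 <= l * (c - 1 + phi q) by apply: mulr_ge0; lra.
      nra.
    * by rewrite q0 q1.
    * move=> y; rewrite /= !in_itv /= => /andP[hy y1]; rewrite y1 andbT.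
      exact: ltW (lt_trans h0 hy).
    * apply: (@lt_le_trans _ _ (1 - h)%:E).
        by rewrite lte_fin /q; lra.
      have h1 : h < 1 by lra.
      by rewrite lebesgue_measure_itv /= lte_fin h1 -EFinD.
    * by nra.
    * by rewrite le_max lexx orbT.
    * move=> y; rewrite /= in_itv /= => /andP[hy y1].
      rewrite fval; last by rewrite y1 andbT; exact: ltW (lt_trans h0 hy).
      rewrite (lt_geF hy) mulrN opprK ger0_norm //; nra.
    * move=> y y01; rewrite fval //; case: ifP => _.
        by rewrite ge_max ler_norm normr_ge0.
      rewrite mulrN opprK ger0_norm; last by nra.
      rewrite ge_max; apply/andP; split; nra.
  + set v2 := Num.max (1 + l * c) 0.
    have v2ge : 1 + l * c <= v2 by rewrite le_max lexx.
    apply: le_trans (norm_lb R mu phi (fun t => 1 - l * f t) p (1 - l * (1 - c)) v2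
      A st ge phi1 _ _ _ _ _ _ _).
    * change ((1:R)%:E <= ((1 - l * (1 - c)) * c + v2 * (1 - c))%:E)%E.
      rewrite lee_fin.
      have H1 : 0 <= (v2 - (1 + l * c)) * (1 - c).
        by apply: mulr_ge0; lra.
      nra.
    * by rewrite p0 p1.
    * move=> y; rewrite /A /= !in_itv /= => /andP[-> yh] /=; lra.
    * rewrite /A lebesgue_measure_itv /= lte_fin h0 sube0 lte_fin //.
    * by nra.
    * by rewrite le_max lexx orbT.
    * move=> y; rewrite /A /= in_itv /= => /andP[y0 yh].
      rewrite fval; last by rewrite y0 /=; lra.
      by rewrite yh ler_norm.
    * move=> y y01; rewrite fval //; case: ifP => _.
        rewrite ger0_norm; last by nra.
        rewrite ge_max; apply/andP; split; nra.
      by rewrite mulrN opprK ge_max ler_norm normr_ge0.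
Qed.
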